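(* Let $\delta\in(0,1)$, let $H$ be an $n$-vertex graph, let $C$ be a set of colours with $|C|\ge7\delta n$, and for every vertex $w$ let $C_w\subseteq C$, such that: (i) $d_H(w)\le|C|-|C_w|$ for every $w\in V(H)$; (ii) there is a set $U\subseteq V(H)$ with $|U|\le\delta n$ such that every edge of $H$ has an endpoint in $U$; (iii) $|C_w|\le\delta n$ for every $w\in V(H)$; (iv) for every $c\in C$, $|\{w\in V(H): c\in C_w\}|\le\delta n$. Then there is a proper edge-colouring $\phi:E(H)\to C$ such that every edge $uv\in E(H)$ satisfies $\phi(uv)\notin C_u\cup C_v$.
   Context: A proper edge-colouring of a graph assigns colours to edges so that edges sharing an endpoint receive different colours; $d_H(w)$ is the degree of $w$ in $H$. *)

(* Defs.v *)
From mathcomp Require Import all_boot all_order all_algebra.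
Set Implicit Arguments. Unset Strict Implicit. Unset Printing Implicit Defensive.
Import Order.TTheory GRing.Theory Num.Theory.

Definition simple_graph (V : finType) (e : rel V) : Prop :=
  symmetric e /\ irreflexive e.

Definition deg (V : finType) (e : rel V) (w : V) : nat := #|[set y | e w y]|.

Definition vertex_cover (V : finType) (e : rel V) (U : {set V}) : Prop :=
  forall x y, e x y -> (x \in U) || (y \in U).

(* An edge-colouring phi (given on ordered pairs, symmetric on edges) with
   colours in C that is proper and avoids the lists C_u, C_v. *)
Definition good_edge_colouring (V K : finType) (e : rel V) (C : {set K})
    (Cw : V -> {set K}) (phi : V -> V -> K) : Prop :=
  (forall x y, e x y -> phi x y = phi y x) /\
  (forall x y, e x y -> phi x y \in C) /\
  (forall x y z, e x y -> e x z -> y != z -> phi x y != phi x z) /\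
  (forall x y, e x y -> (phi x y \notin Cw x) && (phi x y \notin Cw y)).

(* Main.v *)
Require Import Defs.
From mathcomp Require Import all_boot all_order all_algebra.
Import Order.TTheory GRing.Theory Num.Theory.
From mathcomp Require Import zify.
From mathcomp Require Import lra.
Set Implicit Arguments. Unset Strict Implicit. Unset Printing Implicit Defensive.

Lemma sub_cardU (T : finType) (A B C : {set T}) :
  A \subset B :|: C -> (#|A| <= #|B| + #|C|)%N.
Proof. move=> /subset_leq_card h; apply: leq_trans h _; rewrite cardsU; exact: leq_subr. Qed.

Definition NS (X Y : finType) (r : X -> Y -> bool) (S : {set X}) : {set Y} :=
  [set y | [exists x in S, r x y]].

Lemma hall (X Y : finType) (y0 : Y) k : forall (r : X -> Y -> bool) (A : {set X}),
  (#|A| <= k)%N ->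
  (forall S : {set X}, S \subset A -> #|S| <= #|NS r S|)%N ->
  exists f : X -> Y, {in A &, injective f} /\ forall x, x \in A -> r x (f x).
Proof.
elim: k => [|k IH] r A hA hH.
  exists (fun _ => y0); have A0 : A = set0 by apply/eqP; rewrite -cards_eq0; lia.
  by split; [move=> x y; rewrite A0 inE | move=> x; rewrite A0 inE].
case: (boolP [exists S : {set X}, [&& S \subset A, S != set0, S != A & #|NS r S| <= #|S|]]).
  move=> /existsP [S /and4P [sSA S0 SA tight]].
  have ltS : (#|S| < #|A|)%N by apply: proper_card; rewrite properEneq SA.
  have [f1 [inj1 r1]] : exists f : X -> Y, {in S &, injective f} /\ forall x, x \in S -> r x (f x).
    apply: (IH r S); first by lia.
    by move=> T sTS; apply: hH; apply: subset_trans sTS sSA.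
  pose r2 x y := r x y && (y \notin NS r S).
  have [f2 [inj2 r2f]] : exists f : X -> Y, {in A :\: S &, injective f} /\
      forall x, x \in A :\: S -> r2 x (f x).
    apply: (IH r2 (A :\: S)).
      have := cardsD A S; rewrite (setIidPr sSA).
      have : (0 < #|S|)%N by rewrite card_gt0.
      lia.
    move=> T sT.
    have hST : (#|S :|: T| <= #|NS r (S :|: T)|)%N.
      by apply: hH; rewrite subUset sSA; apply: subset_trans sT (subsetDl _ _).
    have dST : S :&: T = set0.
      apply/setP=> x; rewrite !inE; apply/andP=> [[xS xT]].
      by have := subsetP sT x xT; rewrite !inE xS.
    have := cardsUI S T; rewrite dST cards0 addn0 => eST.
    have : (#|NS r (S :|: T)| <= #|NS r S| + #|NS r2 T|)%N.
      apply: sub_cardU; apply/subsetP=> y; rewrite !inE => /existsP [x /andP [xST rxy]].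
      case: (boolP [exists x in S, r x y]) => //= hS.
      apply/existsP; exists x; move: xST; rewrite inE => /orP [xS|xT].
        by move: hS; apply: contraNT => _; apply/existsP; exists x; rewrite xS.
      by rewrite xT /r2 rxy inE hS.
    lia.
  exists (fun x => if x \in S then f1 x else f2 x); split.
    move=> x y xA yA /=.
    case: (boolP (x \in S)) => xS; case: (boolP (y \in S)) => yS.
    - by apply: inj1.
    - move=> E; have := r2f y; rewrite inE yS yA => /(_ isT) /andP [_].
      by rewrite -E inE; case/negP; apply/existsP; exists x; rewrite xS r1.
    - move=> E; have := r2f x; rewrite inE xS xA => /(_ isT) /andP [_].
      by rewrite E inE; case/negP; apply/existsP; exists y; rewrite yS r1.
    - by apply: inj2; rewrite inE ?xS ?yS.
  move=> x xA /=; case: ifP => xS; first by apply: r1.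
  by have := r2f x; rewrite inE xS xA => /(_ isT) /andP [].
rewrite negb_exists => /forallP noT.
case: (set_0Vmem A) => [A0|[x0 x0A]].
  by exists (fun _ => y0); split; [move=> x y; rewrite A0 inE | move=> x; rewrite A0 inE].
have : (0 < #|NS r [set x0]|)%N.
  by apply: leq_trans (hH _ _); [rewrite cards1 | rewrite sub1set].
rewrite card_gt0 => /set0Pn [y1]; rewrite inE => /existsP [x]; rewrite inE => /andP [/eqP -> rxy1]; clear x.
pose r' x y := r x y && (y != y1).
have [f' [inj' rf']] : exists f : X -> Y, {in A :\ x0 &, injective f} /\
    forall x, x \in A :\ x0 -> r' x (f x).
  apply: (IH r' (A :\ x0)).
    by have := cardsD1 x0 A; rewrite x0A; lia.
  move=> T sT.
  case: (set_0Vmem T) => [->|[t tT]]; first by rewrite cards0.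
  have := noT T; rewrite negb_and.
  have sTA : T \subset A by apply: subset_trans sT (subD1set _ _).
  have T0 : T != set0 by apply/set0Pn; exists t.
  have TA : T != A.
    apply/eqP=> TA; have := subsetP sT x0; rewrite TA x0A !inE eqxx => /(_ isT) //.
  rewrite sTA T0 TA /= -ltnNge => lt.
  have : (#|NS r T| <= #|[set y1]| + #|NS r' T|)%N.
    apply: sub_cardU; apply/subsetP=> y; rewrite !inE => /existsP [x /andP [xT rxy]].
    case: (eqVneq y y1) => //= yy1; apply/existsP; exists x; by rewrite xT /r' rxy yy1.
  rewrite cards1; lia.
exists (fun x => if x == x0 then y1 else f' x); split.
  move=> x y xA yA /=.
  case: (eqVneq x x0) => [->|xx0]; case: (eqVneq y x0) => [->|yx0] //.
  - move=> E; have := rf' y; rewrite !inE yx0 yA => /(_ isT) /andP [_].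
    by rewrite -E eqxx.
  - move=> E; have := rf' x; rewrite !inE xx0 xA => /(_ isT) /andP [_].
    by rewrite E eqxx.
  - by apply: inj'; rewrite !inE ?xx0 ?yx0.
move=> x xA /=; case: (eqVneq x x0) => [->//|xx0].
by have := rf' x; rewrite !inE xx0 xA => /(_ isT) /andP [].
Qed.

Lemma hall_app (X Y : finType) (y0 : Y) (A : {set X}) (P : {set Y}) (bl : X -> Y -> bool) :
  (#|A| <= #|P|)%N ->
  (forall x y, x \in A -> y \in P ->
     #|[set y' in P | bl x y']| + #|[set x' in A | bl x' y]| < #|P|)%N ->
  exists f : X -> Y, {in A &, injective f} /\
    forall x, x \in A -> (f x \in P) && ~~ bl x (f x).
Proof.
move=> hAP hb.
pose r := fun x y => (y \in P) && ~~ bl x y.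
apply: (@hall X Y y0 #|A| r A) => // S sSA.
rewrite leqNgt; apply/negP => lt.
have : (0 < #|S|)%N by lia.
rewrite card_gt0 => /set0Pn [x xS].
have xA : x \in A by apply: (subsetP sSA).
have hSA := subset_leq_card sSA.
have nsub : ~~ (P \subset NS r S).
  apply/negP => /subset_leq_card; lia.
case/subsetPn: nsub => y yP yN.
have h1 : (#|P| <= #|[set y' in P | bl x y']| + #|NS r S|)%N.
  apply: sub_cardU; apply/subsetP => y' y'P; rewrite !inE y'P /=.
  case: (boolP (bl x y')) => //= nb; apply/existsP; exists x; by rewrite xS /r y'P nb.
have h2 : (#|S| <= #|[set x' in A | bl x' y]|)%N.
  apply: subset_leq_card; apply/subsetP => x' x'S; rewrite inE (subsetP sSA _ x'S) /=.
  apply/negPn/negP => nb; move: yN; rewrite inE; case/negP.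
  by apply/existsP; exists x'; rewrite x'S /r yP nb.
have := hb x y xA yP; lia.
Qed.

Definition EW (V : finType) (e : rel V) (W : {set V}) : rel V :=
  fun x y => e x y && ((x \in W) || (y \in W)).

Lemma step (V K : finType) (k0 : K) (e : rel V) (C : {set K}) (Cw : V -> {set K}) (U : {set V})
  (hsg : simple_graph e) (hCw : forall w, Cw w \subset C)
  (hdeg : forall w, (deg e w <= #|C| - #|Cw w|)%N)
  (hkey : forall u v c w, c \in C -> (w < #|U|)%N ->
     (#|Cw v| + #|[set x | c \in Cw x]| + 3*w + #|Cw u| < #|C|)%N)
  (W : {set V}) u phi' : W \subset U -> u \in W ->
  good_edge_colouring (EW e (W :\ u)) C Cw phi' ->
  exists phi, good_edge_colouring (EW e W) C Cw phi.
Proof.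
move=> sWU uW [sym' [inC' [prop' avoid']]].
have [esym eirr] := hsg.
set W' := W :\ u.
have uW' : u \notin W' by rewrite !inE eqxx.
have memW x : (x \in W) = (x == u) || (x \in W').
  by rewrite in_setD1; case: eqVneq => [->|] //=.
have ltW : (#|W'| < #|U|)%N.
  have := cardsD1 u W; rewrite uW -/W' add1n => h; have := subset_leq_card sWU; lia.
pose used x := [set phi' x w | w in [set w | (w \in W') && e x w]].
pose N := [set v | e u v && (v \notin W')].
pose P := C :\: (Cw u :|: used u).
pose bl v c := (c \in Cw v) || (c \in used v).
have usedW x : (#|used x| <= #|W'|)%N.
  apply: leq_trans (leq_imset_card _ _) _; apply: subset_leq_card.
  by apply/subsetP => w; rewrite inE => /andP [].
have hCP : (#|C| <= #|P| + #|Cw u| + #|used u|)%N.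
  rewrite -addnA; apply: (@leq_trans (#|P| + #|Cw u :|: used u|)).
    apply: sub_cardU; apply/subsetP => c cC.
    by rewrite in_setU in_setD cC andbT orNb.
  by rewrite leq_add2l; apply: sub_cardU.
have [f [finj fP]] : exists f : V -> K, {in N &, injective f} /\
    forall x, x \in N -> (f x \in P) && ~~ bl x (f x).
  apply: hall_app => //.
    pose NW := [set w | (w \in W') && e u w].
    have h1 : (#|N| + #|NW| <= deg e u)%N.
      rewrite -cardsUI.
      have -> : N :&: NW = set0.
        by apply/setP => w; rewrite in_setI !in_set; case: (e u w); case: (w \in W); case: (w \in [set u]).
      rewrite cards0 addn0; apply: subset_leq_card; apply/subsetP => w.
      by rewrite in_setU !in_set => /orP [/andP [] | /andP []].
    have h2 : (#|used u| <= #|NW|)%N by apply: leq_imset_card.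
    have := hdeg u; have := subset_leq_card (hCw u); lia.
  move=> v c vN cP.
  have cC : c \in C by move: cP; rewrite inE => /andP [].
  have b1 : (#|[set c' in P | bl v c']| <= #|Cw v| + #|W'|)%N.
    apply: leq_trans (leq_add (leqnn _) (usedW v)).
    by apply: sub_cardU; apply/subsetP => c'; rewrite !inE => /andP [_].
  pose S2 := [set v' in N | c \in used v'].
  have b2 : (#|[set v' in N | bl v' c]| <= #|[set x | c \in Cw x]| + #|S2|)%N.
    apply: sub_cardU; apply/subsetP => v'; rewrite !inE.
    by case/andP => -> /orP [->|->] //; rewrite orbT.
  have b3 : (#|S2| <= #|W'|)%N.
    pose g v' := odflt u [pick w in W' | e v' w && (phi' v' w == c)].
    have gP v' : v' \in S2 -> (g v' \in W') && e v' (g v') && (phi' v' (g v') == c).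
      rewrite inE => /andP [_ /imsetP [w]]; rewrite inE => /andP [wW ew] cE.
      rewrite /g; case: pickP => [w' /= /and3P [-> -> ->] //|].
      by move=> /(_ w); rewrite wW ew -cE eqxx.
    have ginj : {in S2 &, injective g}.
      move=> v1 v2 h1 h2 E; apply/eqP; apply/negPn/negP => ne.
      have /andP [/andP [w1 e1] c1] := gP _ h1.
      have /andP [/andP [w2 e2] c2] := gP _ h2.
      rewrite -E in w2 e2 c2.
      have Ew1 : EW e W' (g v1) v1 by rewrite /EW esym e1 w1.
      have Ew2 : EW e W' (g v1) v2 by rewrite /EW esym e2 w1.
      have := prop' _ _ _ Ew1 Ew2 ne.
      rewrite (sym' _ _ Ew1) (sym' _ _ Ew2) (eqP c1) (eqP c2) eqxx //.
    rewrite -(card_in_imset ginj); apply: subset_leq_card; apply/subsetP => w.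
    by case/imsetP => v' h ->; have /andP [/andP [] ] := gP _ h.
  have := hkey u v c _ cC ltW; have := usedW u; lia.
pose phi x y := if (x == u) && (y \in N) then f y
                else if (y == u) && (x \in N) then f x else phi' x y.
have old x y : EW e W x y -> ~~ ((x == u) && (y \in N)) -> ~~ ((y == u) && (x \in N)) ->
    EW e W' x y.
  rewrite /EW !memW => /andP [exy hW].
  case: (eqVneq x u) => [xu|xu] /=.
    subst x; rewrite inE exy /= negbK => ->; by rewrite orbT.
  case: (eqVneq y u) => [yu|yu] /=.
    subst y; move=> _; rewrite inE (esym u) exy /= negbK => ->; by rewrite ?exy ?orbT.
  by move: hW; rewrite (negbTE xu) (negbTE yu) /= exy.
have uN : u \notin N by rewrite inE eirr.
have inused x w : x \notin W' -> EW e W' x w -> phi' x w \in used x.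
  move=> xW /andP [exw]; rewrite (negbTE xW) /= => wW.
  by apply/imsetP; exists w => //; rewrite inE wW exw.
have NW' v : v \in N -> v \notin W' by rewrite inE => /andP [].
exists phi; split; [|split; [|split]].
- move=> x y hxy; rewrite /phi.
  case: (boolP ((x == u) && (y \in N))) => [/andP [/eqP -> yN]|n1].
    by rewrite /= ?(negbTE uN) ?andbF.
  case: (boolP ((y == u) && (x \in N))) => [_|n2].
    by [].
  by apply: sym'; apply: old.
- move=> x y hxy; rewrite /phi.
  case: (boolP ((x == u) && (y \in N))) => [/andP [_ yN]|n1].
    by have /andP [] := fP y yN; rewrite inE => /andP [].
  case: (boolP ((y == u) && (x \in N))) => [/andP [_ xN]|n2].
    by have /andP [] := fP x xN; rewrite inE => /andP [].
  by apply: inC'; apply: old.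
- move=> x y z hxy hxz yz; rewrite /phi.
  case: (eqVneq x u) => [xu|xu] /=.
    subst x.
    have yu : y != u by apply/eqP => E; move: hxy; rewrite E /EW eirr.
    have zu : z != u by apply/eqP => E; move: hxz; rewrite E /EW eirr.
    rewrite (negbTE yu) (negbTE zu) /=.
    case: (boolP (y \in N)) => yN; case: (boolP (z \in N)) => zN.
    + by apply: contra yz => /eqP /finj -> //.
    + have oz : EW e W' u z by apply: old; rewrite ?eqxx ?zN ?(negbTE zu).
      have := inused _ _ uW' oz; have /andP [] := fP y yN.
      move=> /setDP [_]; rewrite in_setU negb_or => /andP [_ nu] _ hz.
      by apply/eqP => E; move: nu; rewrite E hz.
    + have oy : EW e W' u y by apply: old; rewrite ?eqxx ?yN ?(negbTE yu).
      have := inused _ _ uW' oy; have /andP [] := fP z zN.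
      move=> /setDP [_]; rewrite in_setU negb_or => /andP [_ nu] _ hy.
      by apply/eqP => E; move: nu; rewrite -E hy.
    + apply: prop' yz; apply: old; rewrite ?eqxx ?yN ?zN ?(negbTE yu) ?(negbTE zu) //.
  case: (boolP ((y == u) && (x \in N))) => [/andP [/eqP yu xN]|n1].
    subst y.
    have zu : (z == u) = false by apply/negbTE; rewrite eq_sym.
    rewrite zu /=.
    have oz : EW e W' x z by apply: old; rewrite ?(negbTE xu) ?zu.
    have := inused _ _ (NW' _ xN) oz; have /andP [_] := fP x xN.
    rewrite /bl negb_or => /andP [_ nu] hz; apply/eqP => E; move: nu; rewrite E hz //.
  case: (boolP ((z == u) && (x \in N))) => [/andP [/eqP zu xN]|n2].
    subst z.
    have oy : EW e W' x y by apply: old; rewrite ?(negbTE xu).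
    have := inused _ _ (NW' _ xN) oy; have /andP [_] := fP x xN.
    rewrite /bl negb_or => /andP [_ nu] hy; apply/eqP => E; move: nu; rewrite -E hy //.
  by apply: prop' yz; apply: old; rewrite ?(negbTE xu).
- move=> x y hxy; rewrite /phi.
  case: (boolP ((x == u) && (y \in N))) => [/andP [/eqP -> yN]|n1].
    have /andP [/setDP [_]] := fP y yN; rewrite in_setU negb_or => /andP [-> _].
    by rewrite /bl negb_or => /andP [-> _].
  case: (boolP ((y == u) && (x \in N))) => [/andP [/eqP yu xN]|n2].
    subst y; have /andP [/setDP [_]] := fP x xN; rewrite in_setU negb_or => /andP [-> _].
    by rewrite /bl negb_or andbT => /andP [-> _].
  by apply: avoid'; apply: old.
Qed.


Lemma build (V K : finType) (k0 : K) (e : rel V) (C : {set K}) (Cw : V -> {set K}) (U : {set V})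
  (hsg : simple_graph e) (hCw : forall w, Cw w \subset C)
  (hdeg : forall w, (deg e w <= #|C| - #|Cw w|)%N)
  (hkey : forall u v c w, c \in C -> (w < #|U|)%N ->
     (#|Cw v| + #|[set x | c \in Cw x]| + 3*w + #|Cw u| < #|C|)%N) j :
  forall W : {set V}, #|W| = j -> W \subset U ->
  exists phi, good_edge_colouring (EW e W) C Cw phi.
Proof.
elim: j => [|j IH] W hW sWU.
  have W0 : W = set0 by apply/eqP; rewrite -cards_eq0 hW.
  exists (fun _ _ => k0); rewrite /good_edge_colouring /EW W0.
  by split; [|split; [|split]] => x y; rewrite !inE andbF.
have : (0 < #|W|)%N by rewrite hW.
rewrite card_gt0 => /set0Pn [u uW].
have [phi' hphi'] : exists phi, good_edge_colouring (EW e (W :\ u)) C Cw phi.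
  apply: IH.
    by have := cardsD1 u W; rewrite uW hW add1n => -[].
  by apply: subset_trans sWU; apply: subD1set.
exact: (step k0 hsg hCw hdeg hkey sWU uW hphi').
Qed.

Lemma good_ext (V K : finType) (e1 e2 : rel V) (C : {set K}) Cw phi :
  (forall x y, e1 x y = e2 x y) -> good_edge_colouring e1 C Cw phi ->
  good_edge_colouring e2 C Cw phi.
Proof.
move=> E [h1 [h2 [h3 h4]]]; split; [|split; [|split]].
- by move=> x y; rewrite -E; apply: h1.
- by move=> x y; rewrite -E; apply: h2.
- by move=> x y z; rewrite -!E; apply: h3.
- by move=> x y; rewrite -E; apply: h4.
Qed.

Local Open Scope ring_scope.

Theorem lemma9 (R : realFieldType) (delta : R) (V K : finType) (e : rel V)
    (C : {set K}) (Cw : V -> {set K}) :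
  0 < delta < 1 ->
  simple_graph e ->
  7%:R * delta * #|V|%:R <= #|C|%:R ->
  (forall w, Cw w \subset C) ->
  (forall w, (deg e w <= #|C| - #|Cw w|)%N) ->
  (exists U : {set V}, #|U|%:R <= delta * #|V|%:R /\ vertex_cover e U) ->
  (forall w, #|Cw w|%:R <= delta * #|V|%:R) ->
  (forall c, c \in C -> #|[set w | c \in Cw w]|%:R <= delta * #|V|%:R) ->
  exists phi : V -> V -> K, good_edge_colouring e C Cw phi.
Proof.
move=> /andP [d0 d1] hsg h7 hCw hdeg [U [hU cov]] hCwD hhold.
have n0 : 0 <= #|V|%:R :> R by rewrite ler0n.
have D0 : 0 <= delta * #|V|%:R by rewrite mulr_ge0 // ltW.
case: (pickP (@predT K)) => [k0 _|noK].
  have hkey : forall u v c w, c \in C -> (w < #|U|)%N ->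
     (#|Cw v| + #|[set x | c \in Cw x]| + 3*w + #|Cw u| < #|C|)%N.
    move=> u v c w cC lw.
    rewrite -(ltr_nat R) !natrD ?natrM.
    have lw' : (w%:R + 1 <= #|U|%:R :> R) by rewrite natr1 ler_nat.
    have := hCwD v; have := hCwD u; have := hhold c cC.
    move: h7 hU lw' D0; set D := delta * #|V|%:R.
    have -> : 7%:R * delta * #|V|%:R = 7%:R * D :> R by rewrite /D mulrA.
    move=> *; lra.
  have [phi hphi] := build k0 hsg hCw hdeg hkey (erefl #|U|) (subxx U).
  exists phi; apply: good_ext hphi => x y; rewrite /EW.
  by case exy: (e x y) => //=; apply: cov.
have noV : V -> False.
  move=> x.
  have C0 : #|C| = 0%N.
    apply/eqP; rewrite cards_eq0; apply/eqP/setP => c; by have := noK c.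
  have : (0 < #|V|)%N by apply/card_gt0P; exists x.
  rewrite -(ltr_nat R) => Vp.
  move: h7; rewrite C0 => h7.
  have : 0 < 7%:R * delta * #|V|%:R :> R by rewrite !mulr_gt0.
  lra.
by exists (fun x => match noV x with end).
Qed.
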